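(* Let $r\ge 2$, $s$, $t$ be integers with $r+2 \le s \le t-r+1$. Then \[ P_2(\mathcal{C}(s,r)) \le \Big(1 - \frac{1}{rs^2}\Big)\, P_2(\mathcal{L}(s,r,t)). \]
   Context: For a hypergraph $H$, $P_2(H)=\sum_x d(x)^2$ with $d(x)$ the number of edges containing $x$. The colex order on $r$-subsets of $\mathbb{N}$ is $A<B$ iff $\sum_{i\in A}2^i<\sum_{i\in B}2^i$, and $\mathcal{C}(s,r)$ is the family of the first $s$ $r$-subsets of $\mathbb{N}$ in colex order. The lex order on $[t]^{(r)}$ (the $r$-subsets of $\{1,\dots,t\}$) is $A<B$ iff $\min(A\triangle B)\in A$, and $\mathcal{L}(s,r,t)$ is the $r$-graph on $[t]$ consisting of the first $s$ sets of $[t]^{(r)}$ in lex order. *)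

(* Defs.v *)
From mathcomp Require Import all_boot all_order all_algebra.
Set Implicit Arguments. Unset Strict Implicit. Unset Printing Implicit Defensive.

Definition deg n (H : {set {set 'I_n}}) (x : 'I_n) : nat :=
  #|[set A in H | x \in A]|.

Definition P2 n (H : {set {set 'I_n}}) : nat :=
  \sum_(x : 'I_n) (deg H x) ^ 2.

Definition colex_w n (A : {set 'I_n}) : nat := \sum_(i in A) 2 ^ (val i).

Definition colex_init n (s r : nat) : {set {set 'I_n}} :=
  [set A : {set 'I_n} | (#|A| == r) &&
     (#|[set B : {set 'I_n} | (#|B| == r) && (colex_w B < colex_w A)]| < s)].

(* Every r-set with an
   element >= s + r comes after all r-subsets of {0,..,s+r-1}, of which there
   are binomial(s+r, r) >= s; hence the first s r-subsets of N all lie in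
   {0,..,s+r-1} = 'I_(s+r), and we may compute them there. *)
Definition colexC (s r : nat) : {set {set 'I_(s + r)}} := colex_init (s + r) s r.

(* lex order on subsets of [t] (vertex i : 'I_t stands for i+1):
   A < B iff min(A symdiff B) \in A. *)
Definition lex_lt n (A B : {set 'I_n}) : bool :=
  [exists x : 'I_n,
     [&& x \in A, x \notin B &
        [forall y : 'I_n, (y \in (A :\: B) :|: (B :\: A)) ==> (x <= y)]]].

Definition lexL (s r t : nat) : {set {set 'I_t}} :=
  [set A : {set 'I_t} | (#|A| == r) &&
     (#|[set B : {set 'I_t} | (#|B| == r) && lex_lt B A]| < s)].

(* Main.v *)
Require Import Defs.
From mathcomp Require Import all_boot all_order all_algebra.
From mathcomp Require Import zify.
Set Implicit Arguments. Unset Strict Implicit.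

Lemma sum_range n a b : \sum_(i < n) ((a <= i) && (i < b) : nat) = minn n b - a.
Proof.
elim: n => [|n IH]; first by rewrite big_ord0; lia.
rewrite big_ord_recr /= IH.
case: (leqP a n) => h1; case: (ltnP n b) => h2 /=; lia.
Qed.

Lemma card_range n a b : b <= n -> #|[set i : 'I_n | a <= i < b]| = b - a.
Proof.
move=> hb; rewrite -sum1_card big_mkcond /=.
rewrite (eq_bigr (fun i : 'I_n => ((a <= i) && (i < b) : nat))); last first.
  by move=> i _; rewrite inE; case: (_ && _).
rewrite sum_range; lia.
Qed.

Lemma w_sub n (A B : {set 'I_n}) : A \subset B -> colex_w A <= colex_w B.
Proof.
move=> sAB; rewrite /colex_w [X in _ <= X](big_setID A) /=.
rewrite (setIidPr sAB); exact: leq_addr.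
Qed.

Lemma w_mem n (A : {set 'I_n}) x : x \in A -> 2 ^ x <= colex_w A.
Proof. by move=> Ax; rewrite /colex_w (bigD1 x) //= leq_addr. Qed.

Lemma w_range_aux n m : \sum_(i < n) (if i < m then 2 ^ i else 0) + 1 = 2 ^ minn n m.
Proof.
elim: n => [|n IH]; first by rewrite big_ord0 /minn /=; case: m.
rewrite big_ord_recr /= -addnA [_ + 1]addnC addnA IH.
case: (ltnP n m) => h.
  have -> : minn n.+1 m = n.+1 by lia.
  by rewrite expnS mul2n addnn.
have -> : minn n.+1 m = m by lia.
by rewrite addn0.
Qed.

Lemma w_range n m : colex_w [set i : 'I_n | i < m] + 1 = 2 ^ minn n m.
Proof.
rewrite -w_range_aux /colex_w big_mkcond /=; congr (_ + _).
by apply: eq_bigr => i _; rewrite inE.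
Qed.

Lemma w_lt_pow n (A : {set 'I_n}) m : (forall i, i \in A -> i < m) -> colex_w A < 2 ^ m.
Proof.
move=> h; apply: (@leq_ltn_trans (colex_w [set i : 'I_n | i < m])).
  by apply: w_sub; apply/subsetP => i /h; rewrite inE.
have := w_range n m; have : 2 ^ minn n m <= 2 ^ m by rewrite leq_exp2l //; lia.
lia.
Qed.

Lemma w_lower n (A : {set 'I_n}) : 2 ^ #|A| <= colex_w A + 1.
Proof.
suff h : forall k (B : {set 'I_n}), #|B| = k -> 2 ^ k <= colex_w B + 1 by apply: h.
clear A.
elim=> [|k IH] A hA; first by rewrite expn0 addn1.
have [x0 Ax0] : exists x, x \in A by apply/card_gt0P; rewrite hA.
case: (@arg_maxnP _ x0 (mem A) val Ax0) => m Am0 mmax.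
have Am : m \in A := Am0.
have hA' : #|A :\ m| = k by move: hA; rewrite (cardsD1 m) Am; lia.
have sub : forall i, i \in A :\ m -> i < m.
  move=> i; rewrite !inE => /andP [im iA].
  have h := mmax i iA; have h2 : val i != val m by rewrite (inj_eq val_inj).
  move: h h2 => /= h /eqP h2; lia.
have km : k <= m.
  have hc := @card_range n 0 m (ltnW (ltn_ord m)); rewrite subn0 in hc.
  rewrite -hA' -[X in _ <= X]hc; apply: subset_leq_card; apply/subsetP => i /sub im.
  by rewrite inE.
rewrite /colex_w (bigD1 m) //=.
have -> : \sum_(i in A | i != m) 2 ^ i = colex_w (A :\ m).
  by apply: eq_bigl => i; rewrite !inE andbC.
have := IH _ hA'; rewrite expnS.
have : 2 ^ k <= 2 ^ m by rewrite leq_exp2l.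
lia.
Qed.

Lemma wlt n (A B : {set 'I_n}) m : m \in A :\: B -> (forall i, i \in B :\: A -> i < m) ->
  colex_w B < colex_w A.
Proof.
move=> mAB h.
rewrite /colex_w [X in _ < X](big_setID B) [X in X < _](big_setID A) setIC /=.
have h1 := w_mem mAB.
have h2 := w_lt_pow h.
rewrite /colex_w /= in h1 h2; lia.
Qed.

Lemma winj n (A B : {set 'I_n}) : colex_w A = colex_w B -> A = B.
Proof.
move=> e; apply/eqP; apply: contraT => nAB.
pose D := (A :\: B) :|: (B :\: A).
have [x0 Dx0] : exists x, x \in D.
  apply/set0Pn; apply: contra nAB => /eqP D0.
  rewrite eqEsubset; apply/andP; split; apply/subsetP => x xin; apply: contraT => xn.
    have : x \in D by rewrite !inE xin xn.
    by rewrite D0 inE.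
  have : x \in D by rewrite !inE xin xn orbT.
  by rewrite D0 inE.
case: (@arg_maxnP _ x0 (mem D) val Dx0) => m Dm0 mmax.
have Dm : m \in D := Dm0.
have lt : forall i, i \in D -> i != m -> i < m.
  move=> i iD im; have h := mmax i iD; have h2 : val i != val m by rewrite (inj_eq val_inj).
  move: h h2 => /= h /eqP h2; lia.
move: Dm; rewrite inE => /orP [mAB|mBA].
  have : colex_w B < colex_w A.
    apply: (wlt mAB) => i iBA; apply: lt; first by rewrite inE iBA orbT.
    apply: contraTneq iBA => ->; by move: mAB; rewrite !inE; case: (m \in A); case: (m \in B).
  by rewrite e ltnn.
have : colex_w A < colex_w B.
  apply: (wlt mBA) => i iAB; apply: lt; first by rewrite inE iAB.
  apply: contraTneq iAB => ->; by move: mBA; rewrite !inE; case: (m \in A); case: (m \in B).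
by rewrite e ltnn.
Qed.

Lemma P2_pairs n (H : {set {set 'I_n}}) : P2 H = \sum_(A in H) \sum_(B in H) #|A :&: B|.
Proof.
rewrite /P2.
have hd : forall x, deg H x = \sum_(A in H) (x \in A : nat).
  move=> x; rewrite /deg -sum1_card big_mkcond /= [RHS]big_mkcond /=.
  by apply: eq_bigr => A _; rewrite inE; case: (A \in H); case: (x \in A).
rewrite (eq_bigr (fun x => \sum_(A in H) \sum_(B in H) ((x \in A : nat) * (x \in B : nat)))); last first.
  move=> x _; rewrite hd -mulnn big_distrl /=; apply: eq_bigr => A _.
  by rewrite big_distrr.
rewrite exchange_big /=; apply: eq_bigr => A _.
rewrite exchange_big /=; apply: eq_big => // B _.
rewrite -sum1_card [RHS]big_mkcond /=; apply: eq_bigr => x _.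
by rewrite inE; case: (x \in A); case: (x \in B).
Qed.

Lemma sum_if (T : finType) (H : {set T}) (r : nat) :
  \sum_(A in H) \sum_(B in H) (if A == B then r else r.-1) = #|H| * r + #|H| * (#|H|).-1 * r.-1.
Proof.
have inner : forall A, A \in H -> \sum_(B in H) (if A == B then r else r.-1) = r + (#|H|).-1 * r.-1.
  move=> A AH; rewrite (bigD1 A) //= eqxx; congr (_ + _).
  rewrite (eq_bigr (fun _ => r.-1)); last by move=> B /andP [_ /negbTE]; rewrite eq_sym => ->.
  rewrite sum_nat_const; congr (_ * _).
  rewrite [in RHS](cardD1 A) AH /=.
  apply: eq_card => B; rewrite !inE andbC //.
rewrite (eq_bigr _ inner) sum_nat_const; lia.
Qed.

Lemma sum_sub (T : finType) (F L : {set T}) (g : T -> nat) :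
  F \subset L -> \sum_(i in F) g i <= \sum_(i in L) g i.
Proof.
move=> sFL; rewrite [X in _ <= X](big_setID F) /= (setIidPr sFL); exact: leq_addr.
Qed.

Lemma ind_sum (T : finType) (H : {set T}) a b : a \in H -> b \in H ->
  \sum_(A in H) \sum_(B in H) ((A == a) && (B == b) : nat) = 1.
Proof.
move=> aH bH; rewrite (bigD1 a) //= [X in _ + X]big1 ?addn0; last first.
  by move=> A /andP [_ /negbTE ->]; rewrite big1.
rewrite (bigD1 b) //= !eqxx [X in _ + X]big1 //.
by move=> B /andP [_ /negbTE ->]; rewrite andbF.
Qed.

Lemma colex_card n s r : #|colex_init n s r| <= s.
Proof.
set C := colex_init n s r.
have [->|[A0 A0C]] := set_0Vmem C; first by rewrite cards0.
case: (@arg_maxnP _ A0 (mem C) (@colex_w n) A0C) => M CM0 Mmax.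
have CM : M \in C := CM0.
rewrite (cardsD1 M) CM.
have := CM; rewrite inE => /andP [_ hM].
apply: leq_trans hM; rewrite add1n ltnS; apply: subset_leq_card.
apply/subsetP => B; rewrite in_setD1 => /andP [BM BC]; rewrite inE.
have := BC; rewrite inE => /andP [-> _] /=.
have h : colex_w B <= colex_w M := Mmax B BC.
rewrite ltn_neqAle h andbT; apply: contra BM => /eqP e.
by apply/eqP; apply: winj.
Qed.

Lemma few n r : r.+1 <= n ->
  #|[set B : {set 'I_n} | B \subset [set i : 'I_n | i < r.+1] & #|B| == r]| = r.+1.
Proof.
move=> h; rewrite cards_draws.
have -> : #|[set i : 'I_n | i < r.+1]| = r.+1.
  rewrite -[RHS]subn0 -(@card_range n 0 r.+1 h).
  by apply: eq_card => i; rewrite !inE.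
exact: binSn.
Qed.

Lemma card_lt n m : m <= n -> #|[set i : 'I_n | i < m]| = m.
Proof.
move=> h; rewrite -[RHS]subn0 -(@card_range n 0 m h).
by apply: eq_card => i; rewrite !inE.
Qed.

Lemma colex_bound s r : 2 <= r -> r + 2 <= s ->
  P2 (colexC s r) + 2 <= s * r + s * s.-1 * r.-1.
Proof.
move=> hr hs.
set C := colexC s r.
have hR : r.+1 <= s + r by lia.
have ho : r.+1 < s + r by lia.
pose S1 := [set i : 'I_(s+r) | 1 <= i < r.+1].
pose K := [set i : 'I_(s+r) | i < r.-1].
pose o := Ordinal ho.
pose S2 := o |: K.
have oK : o \notin K by rewrite inE /= -leqNgt; lia.
have cK : #|K| = r.-1 by rewrite card_lt //; lia.
have c1 : #|S1| = r by rewrite card_range //; lia.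
have c2 : #|S2| = r by rewrite cardsU1 oK cK; lia.
have wS1 : colex_w S1 < 2 ^ r.+1.
  by apply: w_lt_pow => i; rewrite inE => /andP [_ ->].
have wK : colex_w K + 1 = 2 ^ r.-1.
  by rewrite w_range; congr (2 ^ _); lia.
have wS2 : colex_w S2 = 2 ^ r.+1 + colex_w K by rewrite /colex_w big_setU1.
have S1C : S1 \in C.
  rewrite inE c1 eqxx /=; apply: (@leq_ltn_trans r.+1); last lia.
  rewrite -(few hR); apply: subset_leq_card; apply/subsetP => B.
  rewrite !inE => /andP [/eqP cB wB]; rewrite cB eqxx andbT.
  apply/subsetP => x xB; rewrite inE.
  have h1 := w_mem xB.
  have : 2 ^ x < 2 ^ r.+1 by lia.
  by rewrite ltn_exp2l.
have S2C : S2 \in C.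
  rewrite inE c2 eqxx /=; apply: (@leq_ltn_trans r.+1); last lia.
  rewrite -(few hR); apply: subset_leq_card; apply/subsetP => B.
  rewrite !inE => /andP [/eqP cB wB]; rewrite cB eqxx andbT.
  apply/subsetP => x xB; rewrite inE ltnNge; apply/negP => hx.
  have e : colex_w B = 2 ^ x + colex_w (B :\ x) by rewrite /colex_w (big_setD1 x).
  have cBx : #|B :\ x| = r.-1 by move: cB; rewrite (cardsD1 x B) xB; lia.
  have h1 := w_lower (B :\ x); rewrite cBx in h1.
  have h2 : 2 ^ r.+1 <= 2 ^ x by rewrite leq_exp2l.
  lia.
have I12 : #|S1 :&: S2| <= r - 2.
  have -> : r - 2 = r.-1 - 1 by lia.
  rewrite -(@card_range (s+r) 1 r.-1); last lia.
  apply: subset_leq_card; apply/subsetP => x; rewrite !inE => /andP [/andP [h1 h2] /orP [/eqP xo|h3]].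
    by move: h2; rewrite xo /= ltnn.
  by rewrite h1 h3.
have S12 : S1 != S2.
  by apply/negP => /eqP e; move: I12; rewrite -e setIid c1; lia.
have cC : #|C| <= s := colex_card (s+r) s r.
have cardC : forall A, A \in C -> #|A| = r.
  by move=> A; rewrite inE => /andP [/eqP -> _].
have pt : forall A B, A \in C -> B \in C ->
    #|A :&: B| + ((A == S1) && (B == S2) : nat) + ((A == S2) && (B == S1) : nat)
    <= (if A == B then r else r.-1).
  move=> A B AC BC.
  case: (A =P B) => [<-|nAB].
    rewrite setIid cardC //.
    have hn : ~~ ((A == S1) && (A == S2)).
      by apply/andP => [[/eqP e1 /eqP e2]]; move: S12; rewrite -e1 -e2 eqxx.
    rewrite (negbTE hn) andbC (negbTE hn); lia.
  have hAB : #|A :&: B| <= r.-1.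
    have : #|A :&: B| < #|A|.
      rewrite ltn_neqAle subset_leq_card ?subsetIl // andbT.
      apply: contra_not_neq nAB => e.
      apply/eqP; rewrite eqEcard (cardC A AC) (cardC B BC) leqnn andbT.
      have : A :&: B == A by rewrite eqEcard subsetIl /= -e.
      by move/eqP => <-; rewrite subsetIr.
    by rewrite (cardC A AC); lia.
  case: (A =P S1) => [eA|_]; case: (B =P S2) => [eB|_] /=.
  - subst A B; rewrite (negbTE S12) /=; move: I12; set u := #|S1 :&: S2|; lia.
  - subst A; rewrite (negbTE S12) /=; move: hAB; set u := #|_ :&: _|; lia.
  - have S21 : S2 != S1 by rewrite eq_sym.
    subst B; rewrite (negbTE S21) andbF /=; move: hAB; set u := #|_ :&: _|; lia.
  - case: (A =P S2) => [eA2|nA2]; case: (B =P S1) => [eB1|nB1] /=.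
    1: by subst A B; move: I12; rewrite setIC; set u' := #|_ :&: _|; lia.
    1-3: by move: hAB; set u := #|_ :&: _|; lia.
have H1 : \sum_(A in C) \sum_(B in C)
    (#|A :&: B| + ((A == S1) && (B == S2) : nat) + ((A == S2) && (B == S1) : nat))
    <= \sum_(A in C) \sum_(B in C) (if A == B then r else r.-1).
  by apply: leq_sum => A AC; apply: leq_sum => B BC; exact: pt.
rewrite (eq_bigr (fun A => \sum_(B in C) #|A :&: B| + \sum_(B in C) ((A == S1) && (B == S2) : nat)
   + \sum_(B in C) ((A == S2) && (B == S1) : nat))) in H1; last by move=> A _; rewrite !big_split.
rewrite sum_if !big_split /= !ind_sum // -P2_pairs in H1.
have : #|C| * r + #|C| * (#|C|).-1 * r.-1 <= s * r + s * s.-1 * r.-1.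
  apply: leq_add; first exact: leq_mul.
  apply: leq_mul => //; apply: leq_mul => //; lia.
move=> h2; rewrite -addnA in H1; exact: leq_trans H1 h2.
Qed.

Lemma lex_bound s r t : 2 <= r -> r + 2 <= s -> s + r <= t + 1 ->
  s * r + s * s.-1 * r.-1 <= P2 (lexL s r t).
Proof.
move=> hr hs ht.
have ek : forall k : 'I_s, r.-1 + k < t by move=> k; have := ltn_ord k; lia.
pose e := fun k : 'I_s => (Ordinal (ek k) : 'I_t).
pose K := [set i : 'I_t | i < r.-1].
pose f := fun k : 'I_s => e k |: K.
have eK : forall k, e k \notin K by move=> k; rewrite inE /= -leqNgt leq_addr.
have cK : #|K| = r.-1 by rewrite card_lt //; lia.
have cf : forall k, #|f k| = r by move=> k; rewrite cardsU1 eK cK; lia.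
have finj : injective f.
  move=> k k' e1; have : e k \in f k' by rewrite -e1 setU11.
  rewrite in_setU1 (negbTE (eK k)) orbF => /eqP/(congr1 val) /= h.
  by apply: val_inj => /=; move: h => /=; lia.
have key : forall k (B : {set 'I_t}), #|B| = r -> lex_lt B (f k) ->
    exists2 k' : 'I_s, k' < k & B = f k'.
  move=> k B cB /existsP [x /and3P [xB xA /forallP hx]].
  have hx' : forall y, y \in (B :\: f k) :|: (f k :\: B) -> x <= y.
    by move=> y hy; exact: (implyP (hx y) hy).
  have xK : x \notin K by move: xA; rewrite in_setU1 negb_or => /andP [_ ->].
  have xe : x != e k by move: xA; rewrite in_setU1 negb_or => /andP [-> _].
  have xge : r.-1 <= x by move: xK; rewrite inE -leqNgt.
  have KB : K \subset B.
    apply/subsetP => y yK; apply: contraT => yB.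
    have : x <= y.
      by apply: hx'; rewrite inE; apply/orP; right; rewrite inE yB /= in_setU1 yK orbT.
    by move: yK; rewrite inE; lia.
  have eB : B = x |: K.
    apply/eqP; rewrite eq_sym eqEcard; apply/andP; split.
      apply/subsetP => y; rewrite in_setU1 => /orP [/eqP -> //|]; exact: (subsetP KB).
    by rewrite cardsU1 xK cK cB; lia.
  have ekB : e k \notin B by rewrite eB in_setU1 negb_or eq_sym xe eK.
  have : x <= e k.
    by apply: hx'; rewrite inE; apply/orP; right; rewrite inE ekB /= setU11.
  have : val x != val (e k) by rewrite (inj_eq val_inj).
  move=> /eqP h1 /= h2.
  have xlt : x < r.-1 + k.
    move: h1 h2 => /=; lia.
  have k'lt : x - r.-1 < s by have := ltn_ord k; lia.
  exists (Ordinal k'lt) => /=; first lia.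
  rewrite eB /f; congr (_ |: _); apply: val_inj => /=; lia.
have fL : forall k, f k \in lexL s r t.
  move=> k; rewrite inE cf eqxx /=.
  apply: (@leq_ltn_trans #|[set k' : 'I_s | k' < k]|); last first.
    by rewrite card_lt ?ltn_ord // ltnW.
  apply: (@leq_trans #|f @: [set k' : 'I_s | k' < k]|); last exact: leq_imset_card.
  apply: subset_leq_card.
  apply/subsetP => B; rewrite inE => /andP [/eqP cB lt].
  have [k' k'k ->] := key k B cB lt.
  by apply/imsetP; exists k' => //; rewrite inE.
pose F := [set f k | k : 'I_s].
have cF : #|F| = s by rewrite card_imset // card_ord.
have FL : F \subset lexL s r t by apply/subsetP => A /imsetP [k _ ->]; exact: fL.
rewrite P2_pairs.
apply: (@leq_trans (\sum_(A in F) \sum_(B in F) #|A :&: B|)); last first.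
  apply: (@leq_trans (\sum_(A in lexL s r t) \sum_(B in F) #|A :&: B|)).
    exact: sum_sub.
  by apply: leq_sum => A _; exact: sum_sub.
have := sum_if F r; rewrite cF => <-.
apply: leq_sum => A /imsetP [k _ ->]; apply: leq_sum => B /imsetP [k' _ ->].
case: (f k =P f k') => [<-|_]; first by rewrite setIid cf.
rewrite -cK; apply: subset_leq_card; apply/subsetP => y yK.
by rewrite inE !in_setU1 yK !orbT.
Qed.

From mathcomp Require Import ring.
Import GRing.Theory Num.Theory.
Local Open Scope ring_scope.

Theorem proposition6p4 (r s t : nat) :
  (2 <= r)%N -> (r + 2 <= s)%N -> (s + r <= t + 1)%N ->
  (P2 (colexC s r))%:R <= (1 - 1 / (r * s ^ 2)%:R) * (P2 (lexL s r t))%:R :> rat.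
Proof.
move=> hr hs ht.
have hC := colex_bound hr hs.
have hL := lex_bound hr hs ht.
move: hC hL; set a := P2 _; set b := P2 _; set N := (s * r + _)%N => hC hL.
set X := (r * s ^ 2)%N.
have hNX : (N <= X)%N.
  rewrite /N /X; have : (s.-1 * r.-1 <= s * r.-1)%N by rewrite leq_mul2r leq_pred orbT.
  have -> : (s * s.-1 * r.-1 = s * (s.-1 * r.-1))%N by rewrite mulnA.
  move=> h; have : (s * (s.-1 * r.-1) <= s * (s * r.-1))%N by rewrite leq_mul2l h orbT.
  have : (s * (s * r.-1) + s * r <= r * s ^ 2)%N.
    have -> : (r * s ^ 2 = s * s * r.-1 + s * s)%N.
      by rewrite -mulnn; nia.
    by rewrite mulnA leq_add2l leq_mul2l; apply/orP; right; lia.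
  lia.
have X1 : (1 <= X)%N by lia.
have key : (a * X <= (X - 1) * b)%N.
  have h1 : ((X - 1) * N <= (X - 1) * b)%N by rewrite leq_mul2l hL orbT.
  have h2 : (a * X <= (N - 1) * X)%N by rewrite leq_mul2r; apply/orP; right; lia.
  have h3 : ((N - 1) * X <= (X - 1) * N)%N.
    have e1 : ((N - 1) * X + X = N * X)%N.
      by rewrite mulnBl mul1n subnK // leq_pmull //; lia.
    have e2 : ((X - 1) * N + N = X * N)%N.
      by rewrite mulnBl mul1n subnK // leq_pmull //; lia.
    rewrite mulnC in e2; lia.
  lia.
have hc : 0 < X%:R :> rat by rewrite ltr0n; lia.
have -> : (1 - 1 / X%:R) * b%:R = ((X%:R - 1) * b%:R) / X%:R :> rat.
  by field; rewrite pnatr_eq0; lia.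
rewrite ler_pdivlMr // -natrM -(natrB _ X1) -natrM ler_nat.
exact: key.
Qed.
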